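(* In the standing setup, assume $A$ is generic and $\det f_0'(x)$ is not identically zero, and let $P_0,Q_1,Q_2,Q_3$ be as defined in the context (for $\varepsilon\ne0$, on the set where $s_1s_2s_3\ne0$). Then for $i=1,2,3$: $\nabla P_0(x,\varepsilon)=\varepsilon^2B_i\nabla Q_i(x,\varepsilon)$, gradients taken with respect to $x$.
   Context: Standing setup: $J=\begin{pmatrix}0&I_3\\-I_3&0\end{pmatrix}$ ($6\times6$). $A$ is a fixed real $6\times 6$ skew-Hamiltonian matrix ($A^{\rm T}J=JA$). $H_0$ is a homogeneous cubic polynomial on $\mathbb R^6$ with $A\nabla^2H_0(x)=\nabla^2H_0(x)A^{\rm T}$ for all $x$ ($\nabla^2$ = Hesse matrix), $f_0=J\nabla H_0$, with Jacobi matrix $f_0'$. Genericity: the characteristic polynomial of $A$ (a square of a cubic) has three pairwise distinct roots $\lambda_1,\lambda_2,\lambda_3$, each a double eigenvalue. $B_i=\alpha_iI+\beta_iA+\gamma_iA^2$ ($i=1,2,3$), where $\alpha_i+\beta_i\lambda+\gamma_i\lambda^2$ is the unique polynomial of degree $\le2$ equal to $-1$ at $\lambda_i$ and to $1$ at the other two eigenvalues. $q_i(x)=\tfrac18\operatorname{tr}(B_i^{\rm T}(f_0'(x))^2)$. $s_0=1$, $s_1=1-2\varepsilon^2(q_2+q_3)$, $s_2=1-2\varepsilon^2(q_1+q_3)$, $s_3=1-2\varepsilon^2(q_1+q_2)$; $P_0=\tfrac14\big(\tfrac1{s_0}+\tfrac1{s_1}+\tfrac1{s_2}+\tfrac1{s_3}\big)$,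 $Q_1=\tfrac1{4\varepsilon^2}\big(-\tfrac1{s_0}-\tfrac1{s_1}+\tfrac1{s_2}+\tfrac1{s_3}\big)$, $Q_2=\tfrac1{4\varepsilon^2}\big(-\tfrac1{s_0}+\tfrac1{s_1}-\tfrac1{s_2}+\tfrac1{s_3}\big)$, $Q_3=\tfrac1{4\varepsilon^2}\big(-\tfrac1{s_0}+\tfrac1{s_1}+\tfrac1{s_2}-\tfrac1{s_3}\big)$. *)

(* Defs.v *)
From Stdlib Require Import Reals List Arith.
Import ListNotations.
Open Scope R_scope.

Definition sumR (n : nat) (f : nat -> R) : R :=
  fold_right Rplus 0 (map f (seq 0 n)).

(** Complex numbers as pairs (re, im); the eigenvalues of A may be complex. *)
Definition Cx : Type := (R * R)%type.
Definition RC (r : R) : Cx := (r, 0).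
Definition Cadd (z w : Cx) : Cx := (fst z + fst w, snd z + snd w).
Definition Copp (z : Cx) : Cx := (- fst z, - snd z).
Definition Csub (z w : Cx) : Cx := Cadd z (Copp w).
Definition Cmul (z w : Cx) : Cx :=
  (fst z * fst w - snd z * snd w, fst z * snd w + snd z * fst w).
Definition Cinv (z : Cx) : Cx :=
  (fst z / (fst z ^ 2 + snd z ^ 2), - snd z / (fst z ^ 2 + snd z ^ 2)).
Definition Cdiv (z w : Cx) : Cx := Cmul z (Cinv w).
Definition C0 : Cx := RC 0.
Definition C1 : Cx := RC 1.
Definition sumC (n : nat) (f : nat -> Cx) : Cx :=
  fold_right Cadd C0 (map f (seq 0 n)).

(** Matrices are functions nat -> nat -> K, only indices < 6 matter;
    vectors of R^6 are functions nat -> R. *)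
Definition mulR (M N : nat -> nat -> R) : nat -> nat -> R :=
  fun i j => sumR 6 (fun k => M i k * N k j).
Definition trR (M : nat -> nat -> R) : nat -> nat -> R := fun i j => M j i.
Definition mulC (M N : nat -> nat -> Cx) : nat -> nat -> Cx :=
  fun i j => sumC 6 (fun k => Cmul (M i k) (N k j)).
Definition embC (M : nat -> nat -> R) : nat -> nat -> Cx := fun i j => RC (M i j).
Definition idC : nat -> nat -> Cx := fun i j => if Nat.eqb i j then C1 else C0.
Definition traceC (M : nat -> nat -> Cx) : Cx := sumC 6 (fun k => M k k).
Definition trC (M : nat -> nat -> Cx) : nat -> nat -> Cx := fun i j => M j i.

Definition minor (j : nat) {K : Type} (M : nat -> nat -> K) : nat -> nat -> K :=
  fun i k => M (S i) (if Nat.ltb k j then k else S k).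
Fixpoint detR (n : nat) (M : nat -> nat -> R) : R :=
  match n with
  | O => 1
  | S m => sumR n (fun j => (-1) ^ j * M 0%nat j * detR m (minor j M))
  end.
Fixpoint detC (n : nat) (M : nat -> nat -> Cx) : Cx :=
  match n with
  | O => C1
  | S m => sumC n (fun j => Cmul (RC ((-1) ^ j)) (Cmul (M 0%nat j) (detC m (minor j M))))
  end.

Definition charpolyC (A : nat -> nat -> R) (z : Cx) : Cx :=
  detC 6 (fun i j => Csub (if Nat.eqb i j then z else C0) (RC (A i j))).

(** J = [[0, I3], [-I3, 0]]. *)
Definition Jmat : nat -> nat -> R := fun i j =>
  if (Nat.ltb i 3 && Nat.eqb j (i + 3))%bool then 1
  else if (Nat.ltb j 3 && Nat.eqb i (j + 3))%bool then -1 else 0.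

(** Homogeneous cubic H0(x) = sum_{a,b,c} T a b c x_a x_b x_c with T a
    symmetric 3-tensor (this parametrizes all homogeneous cubics on R^6). *)
Definition sym3 (T : nat -> nat -> nat -> R) : Prop :=
  forall a b c, (a < 6)%nat -> (b < 6)%nat -> (c < 6)%nat ->
    T a b c = T b a c /\ T a b c = T a c b.
Definition H0 (T : nat -> nat -> nat -> R) (x : nat -> R) : R :=
  sumR 6 (fun a => sumR 6 (fun b => sumR 6 (fun c => T a b c * x a * x b * x c))).
(** Hesse matrix of H0 at x (for symmetric T). *)
Definition hessH0 (T : nat -> nat -> nat -> R) (x : nat -> R) : nat -> nat -> R :=
  fun a b => 6 * sumR 6 (fun c => T a b c * x c).
(** Jacobi matrix of f0 = J grad H0, i.e. J * Hess H0. *)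
Definition df0 (T : nat -> nat -> nat -> R) (x : nat -> R) : nat -> nat -> R :=
  mulR Jmat (hessH0 T x).

Definition Bmat (A : nat -> nat -> R) (al be ga : Cx) : nat -> nat -> Cx :=
  fun i j => Cadd (Cadd (Cmul al (idC i j)) (Cmul be (RC (A i j))))
                  (Cmul ga (RC (mulR A A i j))).

Definition qfun (B : nat -> nat -> Cx) (T : nat -> nat -> nat -> R) (x : nat -> R) : Cx :=
  Cmul (RC (1/8)) (traceC (mulC (trC B) (embC (mulR (df0 T x) (df0 T x))))).

Definition sfun (qa qb : Cx) (eps : R) : Cx :=
  Csub C1 (Cmul (RC (2 * eps ^ 2)) (Cadd qa qb)).

Section PQ.
Variables (q1 q2 q3 : Cx) (eps : R).
Let s0 := C1.
Let s1 := sfun q2 q3 eps.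
Let s2 := sfun q1 q3 eps.
Let s3 := sfun q1 q2 eps.
Definition P0v : Cx :=
  Cmul (RC (1/4)) (Cadd (Cadd (Cinv s0) (Cinv s1)) (Cadd (Cinv s2) (Cinv s3))).
Definition Q1v : Cx :=
  Cmul (RC (1 / (4 * eps ^ 2)))
    (Cadd (Cadd (Copp (Cinv s0)) (Copp (Cinv s1))) (Cadd (Cinv s2) (Cinv s3))).
Definition Q2v : Cx :=
  Cmul (RC (1 / (4 * eps ^ 2)))
    (Cadd (Cadd (Copp (Cinv s0)) (Cinv s1)) (Cadd (Copp (Cinv s2)) (Cinv s3))).
Definition Q3v : Cx :=
  Cmul (RC (1 / (4 * eps ^ 2)))
    (Cadd (Cadd (Copp (Cinv s0)) (Cinv s1)) (Cadd (Cinv s2) (Copp (Cinv s3)))).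
Definition s123 : Cx := Cmul s1 (Cmul s2 s3).
End PQ.

Definition Qv (i : nat) (q1 q2 q3 : Cx) (eps : R) : Cx :=
  match i with
  | 1%nat => Q1v q1 q2 q3 eps
  | 2%nat => Q2v q1 q2 q3 eps
  | _ => Q3v q1 q2 q3 eps
  end.

Definition upd (x : nat -> R) (k : nat) (t : R) : nat -> R :=
  fun m => if Nat.eqb m k then t else x m.

Definition is_gradC (F : (nat -> R) -> Cx) (x : nat -> R) (g : nat -> Cx) : Prop :=
  forall k, (k < 6)%nat ->
    derivable_pt_lim (fun t => fst (F (upd x k t))) (x k) (fst (g k)) /\
    derivable_pt_lim (fun t => snd (F (upd x k t))) (x k) (snd (g k)).

(* Main.v *)
Require Import Defs.
From Stdlib Require Import Reals List Arith Lra Lia Ring Field FunctionalExtensionality.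
Open Scope R_scope.
Ltac s6 := cbv [sumR mulR trR map seq fold_right].

Lemma Cx_ring : ring_theory C0 Defs.C1 Cadd Cmul Csub Copp (@eq Cx).
Proof.
  constructor; intros; repeat match goal with z : Cx |- _ => destruct z end;
  unfold Csub, Cadd, Cmul, Copp, C0, Defs.C1, RC; simpl; f_equal; ring.
Qed.
Add Ring CxRing : Cx_ring.

Lemma Cx_integral z w : Cmul z w = C0 -> z <> C0 -> w = C0.
Proof.
  destruct z as [a b], w as [c d]. unfold Cmul, C0, RC; simpl. intros H hz.
  injection H as H1 H2.
  assert (hn : a * a + b * b <> 0).
  { intro h0. apply hz. pose proof (Rle_0_sqr a); pose proof (Rle_0_sqr b); unfold Rsqr in *.
    assert (ha : a * a = 0) by lra. assert (hb : b * b = 0) by lra.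
    f_equal; [destruct (Rmult_integral _ _ ha) | destruct (Rmult_integral _ _ hb)]; auto. }
  assert (c * (a*a+b*b) = a * (a * c - b * d) + b * (a * d + b * c)) as Ec by ring.
  assert (d * (a*a+b*b) = a * (a * d + b * c) - b * (a * c - b * d)) as Ed by ring.
  rewrite H1, H2 in Ec, Ed.
  f_equal; [apply (Rmult_eq_reg_r (a*a+b*b)) | apply (Rmult_eq_reg_r (a*a+b*b))]; auto; lra.
Qed.
Lemma Cx_sub_neq a b : a <> b -> Csub a b <> C0.
Proof.
  intros h e. apply h. transitivity (Cadd (Csub a b) b). ring. rewrite e. ring.
Qed.

Definition Tr := (Cx * Cx * Cx)%type.
Definition t0 (w : Tr) := fst (fst w).
Definition t1 (w : Tr) := snd (fst w).
Definition t2 (w : Tr) := snd w.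
Definition mkT a b c : Tr := (a, b, c).
Definition tadd (v w : Tr) := mkT (Cadd (t0 v) (t0 w)) (Cadd (t1 v) (t1 w)) (Cadd (t2 v) (t2 w)).
Definition tsc (c : Cx) (w : Tr) := mkT (Cmul c (t0 w)) (Cmul c (t1 w)) (Cmul c (t2 w)).
Definition evt (w : Tr) z := Cadd (t0 w) (Cadd (Cmul (t1 w) z) (Cmul (t2 w) (Cmul z z))).

Section Comp.
Variables (s1 s2 s3 : Cx).
Definition Cw (w : Tr) := mkT (Cmul s3 (t2 w)) (Csub (t0 w) (Cmul s2 (t2 w))) (Cadd (t1 w) (Cmul s1 (t2 w))).
Definition Bt al be ga (w : Tr) := tadd (tsc al w) (tadd (tsc be (Cw w)) (tsc ga (Cw (Cw w)))).

Ltac tr := cbv [evt t0 t1 t2 mkT tadd tsc Bt Cw fst snd] in *.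
Lemma evCw w z : Cmul z (Cmul z z) = Cadd (Csub (Cmul s1 (Cmul z z)) (Cmul s2 z)) s3 ->
  evt (Cw w) z = Cmul z (evt w z).
Proof.
  intros hm. destruct w as [[a b] c]. tr.
  transitivity (Cadd (Cmul z (Cadd a (Cadd (Cmul b z) (Cmul c (Cmul z z)))))
     (Cmul c (Csub (Cadd (Csub (Cmul s1 (Cmul z z)) (Cmul s2 z)) s3) (Cmul z (Cmul z z))))).
  ring. rewrite <- hm. ring.
Qed.

Lemma evBt al be ga w z : Cmul z (Cmul z z) = Cadd (Csub (Cmul s1 (Cmul z z)) (Cmul s2 z)) s3 ->
  evt (Bt al be ga w) z = Cmul (Cadd (Cadd al (Cmul be z)) (Cmul ga (Cmul z z))) (evt w z).
Proof.
  intros hm. assert (e1 := evCw w z hm). assert (e2 := evCw (Cw w) z hm).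
  
  transitivity (Cadd (Cmul al (evt w z)) (Cadd (Cmul be (evt (Cw w) z)) (Cmul ga (evt (Cw (Cw w)) z)))).
  unfold Bt, tadd, tsc, evt, t0, t1, t2, mkT; cbv [fst snd]; ring.
  rewrite e2, e1. ring.
Qed.
End Comp.

Ltac tr := cbv [evt t0 t1 t2 mkT tadd tsc Bt Cw fst snd] in *.
Lemma evt_tadd v w z : evt (tadd v w) z = Cadd (evt v z) (evt w z).
Proof. destruct v as [[? ?] ?], w as [[? ?] ?]. tr. ring. Qed.
Lemma evt_tsc c w z : evt (tsc c w) z = Cmul c (evt w z).
Proof. destruct w as [[? ?] ?]. tr. ring. Qed.
Lemma zero3 (a b c : Cx) (w : Tr) : a <> b -> a <> c -> b <> c ->
  evt w a = C0 -> evt w b = C0 -> evt w c = C0 -> w = mkT C0 C0 C0.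
Proof.
  intros hab hac hbc ha hb hc. destruct w as [[r0 r1] r2]. tr.
  assert (E1 : Cmul (Csub a b) (Cadd r1 (Cmul r2 (Cadd a b))) = C0).
  { transitivity (Csub (Cadd r0 (Cadd (Cmul r1 a) (Cmul r2 (Cmul a a)))) (Cadd r0 (Cadd (Cmul r1 b) (Cmul r2 (Cmul b b))))). ring. rewrite ha, hb. ring. }
  assert (E2 : Cmul (Csub a c) (Cadd r1 (Cmul r2 (Cadd a c))) = C0).
  { transitivity (Csub (Cadd r0 (Cadd (Cmul r1 a) (Cmul r2 (Cmul a a)))) (Cadd r0 (Cadd (Cmul r1 c) (Cmul r2 (Cmul c c))))). ring. rewrite ha, hc. ring. }
  apply Cx_integral in E1; [|apply Cx_sub_neq; auto].
  apply Cx_integral in E2; [|apply Cx_sub_neq; auto].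
  assert (E3 : Cmul (Csub b c) r2 = C0).
  { transitivity (Csub (Cadd r1 (Cmul r2 (Cadd a b))) (Cadd r1 (Cmul r2 (Cadd a c)))). ring. rewrite E1, E2. ring. }
  apply Cx_integral in E3; [|apply Cx_sub_neq; auto]. subst r2.
  assert (r1 = C0). { transitivity (Cadd r1 (Cmul C0 (Cadd a b))). ring. rewrite E1. auto. } subst r1.
  assert (r0 = C0). { rewrite <- ha. ring. } subst r0. reflexivity.
Qed.

Lemma keyB s1 s2 s3 al be ga (w : Tr) (l1 l2 l3 s : Cx) :
  l1 <> l2 -> l1 <> l3 -> l2 <> l3 ->
  s1 = Cadd l1 (Cadd l2 l3) -> s2 = Cadd (Cmul l1 l2) (Cadd (Cmul l1 l3) (Cmul l2 l3)) ->
  s3 = Cmul l1 (Cmul l2 l3) ->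
  (forall l, l = l1 \/ l = l2 \/ l = l3 ->
     Cmul (Csub (Cadd (Cadd al (Cmul be l)) (Cmul ga (Cmul l l))) s) (evt w l) = C0) ->
  Bt s1 s2 s3 al be ga w = tsc s w.
Proof.
  intros h12 h13 h23 e1 e2 e3 H.
  assert (hm : forall l, l = l1 \/ l = l2 \/ l = l3 ->
     Cmul l (Cmul l l) = Cadd (Csub (Cmul s1 (Cmul l l)) (Cmul s2 l)) s3).
  { intros l [-> | [-> | ->]]; subst; ring. }
  set (r := tadd (Bt s1 s2 s3 al be ga w) (tsc (Copp s) w)).
  assert (hr : forall l, l = l1 \/ l = l2 \/ l = l3 -> evt r l = C0).
  { intros l hl. rewrite <- (H l hl). unfold r.
    assert (ee := evBt s1 s2 s3 al be ga w l (hm l hl)).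
    rewrite evt_tadd, evt_tsc, ee. ring. }
  assert (hz := zero3 l1 l2 l3 r h12 h13 h23 (hr l1 (or_introl eq_refl))
     (hr l2 (or_intror (or_introl eq_refl))) (hr l3 (or_intror (or_intror eq_refl)))).
  unfold r in hz. revert hz. generalize (Bt s1 s2 s3 al be ga w). intros [[b0 b1] b2].
  destruct w as [[w0 w1] w2]. unfold tadd, tsc, mkT, t0, t1, t2; cbv [fst snd]. intros hz.
  assert (z0 := f_equal t0 hz). assert (z1 := f_equal t1 hz). assert (z2 := f_equal t2 hz).
  clear hz. cbv [t0 t1 t2 tadd tsc mkT fst snd] in z0, z1, z2. f_equal; [f_equal|].
  - transitivity (Cadd (Cadd b0 (Cmul (Copp s) w0)) (Cmul s w0)). ring. rewrite z0. ring.
  - transitivity (Cadd (Cadd b1 (Cmul (Copp s) w1)) (Cmul s w1)). ring. rewrite z1. ring.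
  - transitivity (Cadd (Cadd b2 (Cmul (Copp s) w2)) (Cmul s w2)). ring. rewrite z2. ring.
Qed.



Lemma RC_add a b : RC (a + b) = Cadd (RC a) (RC b).
Proof. unfold RC, Cadd; simpl; f_equal; ring. Qed.
Lemma RC_mul a b : RC (a * b) = Cmul (RC a) (RC b).
Proof. unfold RC, Cmul; simpl; f_equal; ring. Qed.
Lemma RC_sub a b : RC (a - b) = Csub (RC a) (RC b).
Proof. unfold RC, Csub, Cadd, Copp; simpl; f_equal; ring. Qed.

Lemma sumC_RC n f : sumC n (fun i => RC (f i)) = RC (sumR n f).
Proof.
  unfold sumC, sumR. generalize (seq 0 n). induction l; simpl. reflexivity.
  rewrite IHl, RC_add. reflexivity.
Qed.

Lemma sumC_ext n f g : (forall i, f i = g i) -> sumC n f = sumC n g.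
Proof. intros H. unfold sumC. f_equal. apply map_ext. auto. Qed.

Lemma detC_emb n : forall M, detC n (fun i j => RC (M i j)) = RC (detR n M).
Proof.
  induction n; intros M. reflexivity.
  change (detC (S n) (fun i j => RC (M i j))) with
    (sumC (S n) (fun j => Cmul (RC ((-1) ^ j)) (Cmul (RC (M 0%nat j)) (detC n (fun a b => RC (minor j M a b)))))).
  simpl detR. rewrite <- sumC_RC. apply sumC_ext. intros j. rewrite IHn, !RC_mul. ring.
Qed.

Lemma charpoly_real A r :
  charpolyC A (RC r) = RC (detR 6 (fun i j => (if Nat.eqb i j then r else 0) - A i j)).
Proof.
  unfold charpolyC. rewrite <- detC_emb. f_equal.
  apply functional_extensionality; intro i; apply functional_extensionality; intro j.
  destruct (Nat.eqb i j); rewrite RC_sub; reflexivity.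
Qed.
Lemma sumC_ext_lt n f g : (forall i, (i < n)%nat -> f i = g i) -> sumC n f = sumC n g.
Proof.
  intros H. unfold sumC. f_equal. apply map_ext_in. intros a Ha.
  apply in_seq in Ha. apply H. lia.
Qed.

Lemma extract (l1 l2 l3 : Cx) (c1 c2 c3 : R)
  (H : forall r : R,
     let c := Cmul (Csub (RC r) l1) (Cmul (Csub (RC r) l2) (Csub (RC r) l3)) in
     Cmul c c = RC ((r^3 - c1 * r^2 + c2 * r - c3)^2)) :
  RC c1 = Cadd l1 (Cadd l2 l3) /\
  RC c2 = Cadd (Cmul l1 l2) (Cadd (Cmul l1 l3) (Cmul l2 l3)) /\
  RC c3 = Cmul l1 (Cmul l2 l3).
Proof.
  destruct l1 as [a1 b1], l2 as [a2 b2], l3 as [a3 b3].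
  assert (H0 := H 0); assert (H1 := H 1); assert (H2 := H 2);
  assert (H3 := H 3); assert (H4 := H 4); assert (H5 := H 5).
  unfold Cmul, Csub, Cadd, Copp, RC in *; simpl in *.
  repeat match goal with h : (_, _) = (_, _) |- _ => injection h as ?h ?h end.
  assert (e1 : c1 = a1 + a2 + a3) by lra.
  assert (f1 : b3 = - b1 - b2) by lra.
  subst c1 b3.
  assert (e2 : c2 = a1*a2 + a1*a3 + a2*a3 - b1*b2 - b1 * (-b1-b2) - b2*(-b1-b2)) by lra.
  assert (f2 : a1*b2 + a2*b1 + a1*(-b1-b2) + a3*b1 + a2*(-b1-b2) + a3*b2 = 0) by lra.
  assert (f2' : (a1+a2+a3)*(a1*b2 + a2*b1 + a1*(-b1-b2) + a3*b1 + a2*(-b1-b2) + a3*b2) = 0) by (rewrite f2; ring).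
  subst c2.
  assert (e3 : c3 = a1*a2*a3 - a1*b2*(-b1-b2) - a2*b1*(-b1-b2) - a3*b1*b2) by lra.
  assert (f3 : a1*a2*(-b1-b2) + a1*b2*a3 + b1*a2*a3 - b1*b2*(-b1-b2) = 0) by lra.
  subst c3.
  split; [|split]; f_equal; try ring; lra.
Qed.

Section SH.
Variable A : nat -> nat -> R.
Hypothesis hA : forall i j, (i < 6)%nat -> (j < 6)%nat ->
          mulR (trR A) Jmat i j = mulR Jmat A i j.

Ltac geteq i j := let e := fresh in assert (e := hA i j ltac:(lia) ltac:(lia));
  cbv [mulR trR Jmat sumR map seq fold_right Nat.ltb Nat.leb Nat.eqb andb Nat.add] in e; lra.
Lemma A33 : A 3 3 = A 0 0. Proof. geteq 0%nat 3%nat. Qed.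
Lemma A34 : A 3 4 = A 1 0. Proof. geteq 0%nat 4%nat. Qed.
Lemma A35 : A 3 5 = A 2 0. Proof. geteq 0%nat 5%nat. Qed.
Lemma A43 : A 4 3 = A 0 1. Proof. geteq 1%nat 3%nat. Qed.
Lemma A44 : A 4 4 = A 1 1. Proof. geteq 1%nat 4%nat. Qed.
Lemma A45 : A 4 5 = A 2 1. Proof. geteq 1%nat 5%nat. Qed.
Lemma A53 : A 5 3 = A 0 2. Proof. geteq 2%nat 3%nat. Qed.
Lemma A54 : A 5 4 = A 1 2. Proof. geteq 2%nat 4%nat. Qed.
Lemma A55 : A 5 5 = A 2 2. Proof. geteq 2%nat 5%nat. Qed.
Lemma A13 : A 1 3 = - A 0 4. Proof. geteq 3%nat 4%nat. Qed.
Lemma A40 : A 4 0 = - A 3 1. Proof. geteq 1%nat 0%nat. Qed.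
Lemma A23 : A 2 3 = - A 0 5. Proof. geteq 3%nat 5%nat. Qed.
Lemma A50 : A 5 0 = - A 3 2. Proof. geteq 2%nat 0%nat. Qed.
Lemma A24 : A 2 4 = - A 1 5. Proof. geteq 4%nat 5%nat. Qed.
Lemma A51 : A 5 1 = - A 4 2. Proof. geteq 2%nat 1%nat. Qed.
Lemma A03 : A 0 3 = 0. Proof. geteq 3%nat 3%nat. Qed.
Lemma A30 : A 3 0 = 0. Proof. geteq 0%nat 0%nat. Qed.
Lemma A14 : A 1 4 = 0. Proof. geteq 4%nat 4%nat. Qed.
Lemma A41 : A 4 1 = 0. Proof. geteq 1%nat 1%nat. Qed.
Lemma A25 : A 2 5 = 0. Proof. geteq 5%nat 5%nat. Qed.
Lemma A52 : A 5 2 = 0. Proof. geteq 2%nat 2%nat. Qed.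
Ltac canon := rewrite ?A33, ?A34, ?A35, ?A43, ?A44, ?A45, ?A53, ?A54, ?A55, ?A13, ?A40, ?A23, ?A50, ?A24, ?A51, ?A03, ?A30, ?A14, ?A41, ?A25, ?A52.
Definition c1 := A 0 0 + A 1 1 + A 2 2.
Definition c2 := A 1 1 * A 2 2 - A 1 2 * A 2 1 + A 0 0 * A 2 2 - A 0 2 * A 2 0 + A 0 0 * A 1 1 - A 0 1 * A 1 0
  + A 0 4 * A 3 1 + A 0 5 * A 3 2 + A 1 5 * A 4 2.
Definition c3 := A 0 0 * (A 1 1 * A 2 2 - A 1 2 * A 2 1) - A 0 1 * (A 1 0 * A 2 2 - A 1 2 * A 2 0)
  + A 0 2 * (A 1 0 * A 2 1 - A 1 1 * A 2 0)
  + A 0 2 * A 1 5 * A 3 1 - A 1 2 * A 0 5 * A 3 1 + A 2 2 * A 0 4 * A 3 1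
  - A 0 1 * A 1 5 * A 3 2 + A 1 1 * A 0 5 * A 3 2 - A 2 1 * A 0 4 * A 3 2
  + A 0 0 * A 1 5 * A 4 2 - A 1 0 * A 0 5 * A 4 2 + A 2 0 * A 0 4 * A 4 2.
Definition idR : nat -> nat -> R := fun i j => if Nat.eqb i j then 1 else 0.

Lemma CH : forall i j, (i < 6)%nat -> (j < 6)%nat ->
  mulR A (mulR A A) i j = c1 * mulR A A i j - c2 * A i j + c3 * idR i j.
Proof.
  intros i j hi hj.
  destruct i as [|[|[|[|[|[|i]]]]]]; try lia; destruct j as [|[|[|[|[|[|j]]]]]]; try lia;
  cbv [mulR idR sumR map seq fold_right Nat.eqb]; unfold c1, c2, c3; canon; ring.
Qed.

Lemma DET : forall r,
  detR 6 (fun i j => (if Nat.eqb i j then r else 0) - A i j) = (r^3 - c1 * r^2 + c2 * r - c3)^2.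
Proof.
  intros r. cbv [detR sumR minor map seq fold_right Nat.ltb Nat.leb Nat.eqb].
  unfold c1, c2, c3; canon. ring.
Qed.
End SH.


Lemma sumR_ext n f g : (forall i, (i < n)%nat -> f i = g i) -> sumR n f = sumR n g.
Proof.
  intros H. unfold sumR. f_equal. apply map_ext_in. intros a Ha.
  apply in_seq in Ha. apply H. lia.
Qed.
Lemma sumR_plus n f g : sumR n (fun i => f i + g i) = sumR n f + sumR n g.
Proof. unfold sumR. induction (seq 0 n); simpl; [ring| rewrite IHl; ring]. Qed.
Lemma sumR_scal n c f : sumR n (fun i => c * f i) = c * sumR n f.
Proof. unfold sumR. induction (seq 0 n); simpl; [ring| rewrite IHl; ring]. Qed.

Lemma dlim_eq f t l l' : derivable_pt_lim f t l -> l = l' -> derivable_pt_lim f t l'.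
Proof. intros; subst; auto. Qed.
Lemma dlim_ext f g t l : (forall s, f s = g s) -> derivable_pt_lim g t l -> derivable_pt_lim f t l.
Proof. intros H. replace f with g; auto. apply functional_extensionality; intros; auto. Qed.
Lemma d_sumR n (f : nat -> R -> R) d t :
  (forall i, (i < n)%nat -> derivable_pt_lim (f i) t (d i)) ->
  derivable_pt_lim (fun s => sumR n (fun i => f i s)) t (sumR n d).
Proof.
  intros H. unfold sumR.
  assert (Hl : forall i, In i (seq 0 n) -> derivable_pt_lim (f i) t (d i)).
  { intros i Hi. apply in_seq in Hi. apply H. lia. }
  revert Hl. generalize (seq 0 n). induction l; intros Hl; simpl.
  - apply derivable_pt_lim_const.
  - apply (derivable_pt_lim_plus (f a) (fun s => fold_right Rplus 0 (map (fun i => f i s) l))).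
    + apply Hl; simpl; auto.
    + apply IHl. intros; apply Hl; simpl; auto.
Qed.
Lemma d_mul f g t a b : derivable_pt_lim f t a -> derivable_pt_lim g t b ->
  derivable_pt_lim (fun s => f s * g s) t (a * g t + f t * b).
Proof. intros; apply (derivable_pt_lim_mult f g); auto. Qed.
Lemma d_cmul c f t a : derivable_pt_lim f t a -> derivable_pt_lim (fun s => c * f s) t (c * a).
Proof.
  intros H. apply dlim_eq with (0 * f t + c * a); [|ring].
  apply (d_mul (fun _ => c) f); auto. apply derivable_pt_lim_const.
Qed.
Lemma d_aff a b t0 : derivable_pt_lim (fun t => a + (t - t0) * b) t0 b.
Proof.
  apply dlim_eq with (0 + (1 - 0) * b); [|ring].
  apply (derivable_pt_lim_plus (fun _ => a) (fun t => (t - t0) * b)).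
  apply derivable_pt_lim_const.
  apply dlim_eq with ((1 - 0) * b + (t0 - t0) * 0); [|ring].
  apply (d_mul (fun t => t - t0) (fun _ => b)).
  apply (derivable_pt_lim_minus id (fun _ => t0)). apply derivable_pt_lim_id. apply derivable_pt_lim_const.
  apply derivable_pt_lim_const.
Qed.

Section Calc.
Variable T : nat -> nat -> nat -> R.
Variable x : nat -> R.

Definition Fk (k : nat) := mulR Jmat (fun a b => 6 * T a b k).
Definition Gm (y : nat -> R) := mulR (df0 T y) (df0 T y).
Definition gM (M : nat -> nat -> R) (y : nat -> R) :=
  (1/8) * sumR 6 (fun m => sumR 6 (fun l => M m l * Gm y m l)).
Definition dG k m l := mulR (Fk k) (df0 T x) m l + mulR (df0 T x) (Fk k) m l.
Definition VM (M : nat -> nat -> R) k :=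
  (1/8) * sumR 6 (fun m => sumR 6 (fun l => M m l * dG k m l)).

Lemma hess_upd k t p n : (k < 6)%nat ->
  hessH0 T (upd x k t) p n = hessH0 T x p n + (t - x k) * (6 * T p n k).
Proof.
  intros hk. unfold hessH0, upd.
  destruct k as [|[|[|[|[|[|k]]]]]]; try lia; s6; simpl; ring.
Qed.

Lemma F_upd k t m n : (k < 6)%nat ->
  df0 T (upd x k t) m n = df0 T x m n + (t - x k) * Fk k m n.
Proof.
  intros hk. unfold df0, Fk, mulR.
  rewrite <- sumR_scal, <- sumR_plus. apply sumR_ext. intros p _.
  rewrite hess_upd by auto. ring.
Qed.

Lemma dF k m n : (k < 6)%nat ->
  derivable_pt_lim (fun t => df0 T (upd x k t) m n) (x k) (Fk k m n).
Proof.
  intros hk. eapply dlim_ext. intros s. apply F_upd; auto. apply d_aff.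
Qed.

Lemma dGm k m l : (k < 6)%nat ->
  derivable_pt_lim (fun t => Gm (upd x k t) m l) (x k) (dG k m l).
Proof.
  intros hk. unfold Gm, dG. unfold mulR at 1.
  eapply dlim_eq. apply d_sumR with (f := fun n t => df0 T (upd x k t) m n * df0 T (upd x k t) n l).
  intros n _. apply d_mul; apply dF; auto.
  unfold mulR. rewrite <- sumR_plus. apply sumR_ext. intros n _.
  rewrite !F_upd by auto. ring.
Qed.

Lemma dgM M k : (k < 6)%nat ->
  derivable_pt_lim (fun t => gM M (upd x k t)) (x k) (VM M k).
Proof.
  intros hk. unfold gM, VM. apply d_cmul.
  apply d_sumR with (f := fun m t => sumR 6 (fun l => M m l * Gm (upd x k t) m l)).
  intros m _. apply d_sumR with (f := fun l t => M m l * Gm (upd x k t) m l).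
  intros l _. apply d_cmul. apply dGm; auto.
Qed.
End Calc.

Lemma X1 (a b : nat -> R) (c : nat -> nat -> R) :
  sumR 6 (fun k' => a k' * sumR 6 (fun p => b p * c p k')) =
  sumR 6 (fun p => b p * sumR 6 (fun k' => a k' * c p k')).
Proof. s6; ring. Qed.
Lemma massoc X Y Z i j : mulR (mulR X Y) Z i j = mulR X (mulR Y Z) i j.
Proof. s6; ring. Qed.
Lemma mextl X X' Y i j : (i < 6)%nat -> (forall a b, (a < 6)%nat -> (b < 6)%nat -> X a b = X' a b) ->
  mulR X Y i j = mulR X' Y i j.
Proof. intros hi H. unfold mulR. apply sumR_ext. intros k hk. rewrite H; auto. Qed.
Lemma mextr X Y Y' i j : (j < 6)%nat -> (forall a b, (a < 6)%nat -> (b < 6)%nat -> Y a b = Y' a b) ->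
  mulR X Y i j = mulR X Y' i j.
Proof. intros hj H. unfold mulR. apply sumR_ext. intros k hk. rewrite H; auto. Qed.
Lemma X2 (a : nat -> R) c (M : nat -> nat -> R) (D : nat -> nat -> nat -> R) :
  sumR 6 (fun k' => a k' * (c * sumR 6 (fun m => sumR 6 (fun l => M m l * D k' m l)))) =
  c * sumR 6 (fun m => sumR 6 (fun l => M m l * sumR 6 (fun k' => a k' * D k' m l))).
Proof. s6; ring. Qed.
Lemma X3 (a : nat -> R) (P : nat -> nat -> nat -> R) (Q : nat -> nat -> R) m l :
  sumR 6 (fun k' => a k' * (mulR (P k') Q m l + mulR Q (P k') m l)) =
  mulR (fun i j => sumR 6 (fun k' => a k' * P k' i j)) Q m l +
  mulR Q (fun i j => sumR 6 (fun k' => a k' * P k' i j)) m l.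
Proof. s6; ring. Qed.
Lemma X4 (A M Y : nat -> nat -> R) :
  sumR 6 (fun m => sumR 6 (fun l => M m l * mulR (trR A) Y m l)) =
  sumR 6 (fun m => sumR 6 (fun l => mulR A M m l * Y m l)).
Proof. s6; ring. Qed.
Lemma mplus X Y Z i j : mulR X Y i j + mulR X Z i j = mulR X (fun a b => Y a b + Z a b) i j.
Proof. s6; ring. Qed.

Section KLs.
Variables (A : nat -> nat -> R) (T : nat -> nat -> nat -> R) (x : nat -> R).
Hypothesis hA : forall i j, (i < 6)%nat -> (j < 6)%nat ->
          mulR (trR A) Jmat i j = mulR Jmat A i j.
Hypothesis hT : sym3 T.
Hypothesis hH : forall x i j, (i < 6)%nat -> (j < 6)%nat ->
          mulR A (hessH0 T x) i j = mulR (hessH0 T x) (trR A) i j.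

Definition ev (b : nat) : nat -> R := fun c => if Nat.eqb c b then 1 else 0.
Lemma hess_e b m a : (b < 6)%nat -> hessH0 T (ev b) m a = 6 * T m a b.
Proof. intros hb. unfold hessH0, ev. destruct b as [|[|[|[|[|[|b]]]]]]; try lia; s6; simpl; ring. Qed.

Lemma TP1 a b c : (a<6)%nat -> (b<6)%nat -> (c<6)%nat -> T a b c = T c a b.
Proof. intros. destruct (hT a b c) as [_ h1]; auto. destruct (hT a c b) as [h2 _]; auto. congruence. Qed.
Lemma TP2 a b c : (a<6)%nat -> (b<6)%nat -> (c<6)%nat -> T a b c = T b c a.
Proof. intros. rewrite (TP1 b c a); auto. Qed.

Lemma KL0 k a b : (k<6)%nat -> (a<6)%nat -> (b<6)%nat ->
  sumR 6 (fun k' => A k k' * (6 * T a b k')) = sumR 6 (fun d => A a d * (6 * T d b k)).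
Proof.
  intros hk ha hb. assert (h := hH (ev b) k a hk ha). unfold mulR, trR in h.
  transitivity (sumR 6 (fun m => A k m * hessH0 T (ev b) m a)).
  { apply sumR_ext; intros m hm. rewrite hess_e, (TP1 a b m); auto. }
  rewrite h. apply sumR_ext; intros d hd. rewrite hess_e, (TP2 k d b); auto. ring.
Qed.

Lemma FkA k m n : (k<6)%nat -> (m<6)%nat -> (n<6)%nat ->
  sumR 6 (fun k' => A k k' * Fk T k' m n) = mulR (trR A) (Fk T k) m n.
Proof.
  intros hk hm hn. unfold Fk at 1. unfold mulR at 1. rewrite X1.
  transitivity (mulR Jmat (mulR A (fun a b => 6 * T a b k)) m n).
  { unfold mulR at 1. apply sumR_ext. intros p hp. f_equal. rewrite KL0; auto. }
  rewrite <- massoc. rewrite (mextl _ (mulR (trR A) Jmat)); auto.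
  rewrite massoc. reflexivity. intros; rewrite hA; auto.
Qed.

Lemma FAcomm m n : (m<6)%nat -> (n<6)%nat ->
  mulR (df0 T x) (trR A) m n = mulR (trR A) (df0 T x) m n.
Proof.
  intros hm hn. unfold df0. rewrite massoc.
  rewrite (mextr _ _ (mulR A (hessH0 T x))); auto.
  rewrite <- massoc. rewrite (mextl _ (mulR (trR A) Jmat)); auto.
  rewrite massoc. reflexivity.
  intros; rewrite hA; auto. intros; rewrite hH; auto.
Qed.

Lemma KL M k : (k<6)%nat ->
  sumR 6 (fun k' => A k k' * VM T x M k') = VM T x (mulR A M) k.
Proof.
  intros hk. unfold VM. rewrite X2. f_equal.
  rewrite <- X4. apply sumR_ext; intros m hm. apply sumR_ext; intros l hl. f_equal.
  unfold dG. rewrite X3.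
  assert (E1 : forall a b, (a < 6)%nat -> (b < 6)%nat ->
     sumR 6 (fun k' => A k k' * Fk T k' a b) = mulR (trR A) (Fk T k) a b).
  { intros; apply FkA; auto. }
  rewrite (mextl _ (mulR (trR A) (Fk T k))) by (auto; intros; apply E1; auto).
  rewrite (mextr (df0 T x) _ (mulR (trR A) (Fk T k))) by (auto; intros; apply E1; auto).
  rewrite (massoc (trR A) (Fk T k) (df0 T x)).
  rewrite <- (massoc (df0 T x) (trR A) (Fk T k)).
  rewrite (mextl (mulR (df0 T x) (trR A)) (mulR (trR A) (df0 T x))) by (auto; intros; apply FAcomm; auto).
  rewrite (massoc (trR A) (df0 T x) (Fk T k)).
  apply mplus.
Qed.
End KLs.

Definition DC (f : R -> Cx) t (d : Cx) :=
  derivable_pt_lim (fun s => fst (f s)) t (fst d) /\ derivable_pt_lim (fun s => snd (f s)) t (snd d).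

Lemma DC_eq f t d d' : DC f t d -> d = d' -> DC f t d'.
Proof. intros; subst; auto. Qed.
Lemma DC_ext f g t d : (forall s, f s = g s) -> DC g t d -> DC f t d.
Proof. intros H; replace f with g; auto. apply functional_extensionality; intros; auto. Qed.
Lemma DC_const c t : DC (fun _ => c) t C0.
Proof. split; apply derivable_pt_lim_const. Qed.
Lemma DC_add f g t a b : DC f t a -> DC g t b -> DC (fun s => Cadd (f s) (g s)) t (Cadd a b).
Proof.
  intros [h1 h2] [h3 h4]. split; simpl.
  apply (derivable_pt_lim_plus (fun s => fst (f s)) (fun s => fst (g s))); auto.
  apply (derivable_pt_lim_plus (fun s => snd (f s)) (fun s => snd (g s))); auto.
Qed.
Lemma DC_opp f t a : DC f t a -> DC (fun s => Copp (f s)) t (Copp a).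
Proof.
  intros [h1 h2]. split; simpl.
  apply (derivable_pt_lim_opp (fun s => fst (f s))); auto.
  apply (derivable_pt_lim_opp (fun s => snd (f s))); auto.
Qed.
Lemma DC_mul f g t a b : DC f t a -> DC g t b ->
  DC (fun s => Cmul (f s) (g s)) t (Cadd (Cmul a (g t)) (Cmul (f t) b)).
Proof.
  intros [h1 h2] [h3 h4]. split; simpl.
  - eapply dlim_eq.
    apply (derivable_pt_lim_minus (fun s => fst (f s) * fst (g s)) (fun s => snd (f s) * snd (g s)));
    apply d_mul; eauto. simpl; ring.
  - eapply dlim_eq.
    apply (derivable_pt_lim_plus (fun s => fst (f s) * snd (g s)) (fun s => snd (f s) * fst (g s)));
    apply d_mul; eauto. simpl; ring.
Qed.
Lemma DC_RC f t a : derivable_pt_lim f t a -> DC (fun s => RC (f s)) t (RC a).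
Proof. intros h. split; simpl; auto. apply derivable_pt_lim_const. Qed.

Lemma DC_inv f t a : DC f t a -> f t <> C0 ->
  DC (fun s => Cinv (f s)) t (Copp (Cmul a (Cmul (Cinv (f t)) (Cinv (f t))))).
Proof.
  intros [h1 h2] hz.
  destruct (f t) as [p q] eqn:E.
  assert (hn : p ^ 2 + q ^ 2 <> 0).
  { intros h0. apply hz. unfold C0, RC. f_equal; nra. }
  assert (D : derivable_pt_lim (fun s => fst (f s) ^ 2 + snd (f s) ^ 2) t
            (2 * p * fst a + 2 * q * snd a)).
  { eapply dlim_eq. apply (derivable_pt_lim_plus (fun s => fst (f s) ^ 2) (fun s => snd (f s) ^ 2)).
    eapply dlim_ext. intros s. simpl. rewrite Rmult_1_r. reflexivity. apply d_mul; eauto.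
    eapply dlim_ext. intros s. simpl. rewrite Rmult_1_r. reflexivity. apply d_mul; eauto.
    cbv beta; rewrite E; simpl; ring. }
  assert (hn' : (fun s => fst (f s) ^ 2 + snd (f s) ^ 2) t <> 0) by (cbv beta; rewrite E; simpl; auto).
  assert (hn2 : p * p + q * q <> 0) by (simpl in hn; rewrite !Rmult_1_r in hn; auto).
  assert (ho : derivable_pt_lim (fun s => - snd (f s)) t (- snd a)).
  { apply (derivable_pt_lim_opp (fun s => snd (f s))); auto. }
  split; unfold Cinv; simpl.
  - eapply dlim_eq.
    apply (derivable_pt_lim_div (fun s => fst (f s)) (fun s => fst (f s) ^ 2 + snd (f s) ^ 2)); eauto.
    cbv beta; rewrite E; simpl. unfold Rsqr. field. auto.
  - eapply dlim_eq.
    apply (derivable_pt_lim_div (fun s => - snd (f s)) (fun s => fst (f s) ^ 2 + snd (f s) ^ 2)); eauto.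
    cbv beta; rewrite E; simpl. unfold Rsqr. field. auto.
Qed.

Lemma DC_sfun fa fb t da db eps : DC fa t da -> DC fb t db ->
  DC (fun s => sfun (fa s) (fb s) eps) t (Copp (Cmul (RC (2*eps^2)) (Cadd da db))).
Proof.
  intros ha hb. unfold sfun, Csub.
  eapply DC_eq. apply DC_add. apply DC_const. apply DC_opp. apply DC_mul. apply DC_const.
  apply DC_add; eauto. cbv beta; ring.
Qed.

Definition dinv (u ka d1 d2 : Cx) := Cmul (Cmul u u) (Cmul ka (Cadd d1 d2)).

Lemma DC_invs fa fb t da db eps : DC fa t da -> DC fb t db -> sfun (fa t) (fb t) eps <> C0 ->
  DC (fun s => Cinv (sfun (fa s) (fb s) eps)) t
    (dinv (Cinv (sfun (fa t) (fb t) eps)) (RC (2*eps^2)) da db).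
Proof.
  intros ha hb hz. eapply DC_eq. apply (DC_inv (fun s => sfun (fa s) (fb s) eps)).
  apply (DC_sfun fa fb t da db); auto. auto. unfold dinv. cbv beta; ring.
Qed.

Section DPQ.
Variables (f1 f2 f3 : R -> Cx) (t eps : R) (d1 d2 d3 : Cx).
Hypotheses (h1 : DC f1 t d1) (h2 : DC f2 t d2) (h3 : DC f3 t d3).
Hypotheses (n1 : sfun (f2 t) (f3 t) eps <> C0) (n2 : sfun (f1 t) (f3 t) eps <> C0)
  (n3 : sfun (f1 t) (f2 t) eps <> C0).
Let u1 := Cinv (sfun (f2 t) (f3 t) eps).
Let u2 := Cinv (sfun (f1 t) (f3 t) eps).
Let u3 := Cinv (sfun (f1 t) (f2 t) eps).
Let ka := RC (2*eps^2).
Let I1 := dinv u1 ka d2 d3.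
Let I2 := dinv u2 ka d1 d3.
Let I3 := dinv u3 ka d1 d2.
Let J1 := DC_invs f2 f3 t d2 d3 eps h2 h3 n1.
Let J2 := DC_invs f1 f3 t d1 d3 eps h1 h3 n2.
Let J3 := DC_invs f1 f2 t d1 d2 eps h1 h2 n3.

Lemma DP : DC (fun s => P0v (f1 s) (f2 s) (f3 s) eps) t
  (Cmul (RC (1/4)) (Cadd I1 (Cadd I2 I3))).
Proof.
  unfold P0v; cbv zeta. eapply DC_eq. apply DC_mul. apply DC_const.
  apply DC_add. apply DC_add. apply DC_const. apply J1. apply DC_add. apply J2. apply J3.
  unfold I1, I2, I3, u1, u2, u3, ka. cbv beta; ring.
Qed.
Lemma DQ1 : DC (fun s => Q1v (f1 s) (f2 s) (f3 s) eps) t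
  (Cmul (RC (1 / (4 * eps ^ 2))) (Cadd (Copp I1) (Cadd I2 I3))).
Proof.
  unfold Q1v; cbv zeta. eapply DC_eq. apply DC_mul. apply DC_const.
  apply DC_add. apply DC_add. apply DC_opp, DC_const. apply DC_opp, J1. apply DC_add. apply J2. apply J3.
  unfold I1, I2, I3, u1, u2, u3, ka. cbv beta; ring.
Qed.
Lemma DQ2 : DC (fun s => Q2v (f1 s) (f2 s) (f3 s) eps) t
  (Cmul (RC (1 / (4 * eps ^ 2))) (Cadd I1 (Cadd (Copp I2) I3))).
Proof.
  unfold Q2v; cbv zeta. eapply DC_eq. apply DC_mul. apply DC_const.
  apply DC_add. apply DC_add. apply DC_opp, DC_const. apply J1. apply DC_add. apply DC_opp, J2. apply J3.
  unfold I1, I2, I3, u1, u2, u3, ka. cbv beta; ring.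
Qed.
Lemma DQ3 : DC (fun s => Q3v (f1 s) (f2 s) (f3 s) eps) t
  (Cmul (RC (1 / (4 * eps ^ 2))) (Cadd I1 (Cadd I2 (Copp I3)))).
Proof.
  unfold Q3v; cbv zeta. eapply DC_eq. apply DC_mul. apply DC_const.
  apply DC_add. apply DC_add. apply DC_opp, DC_const. apply J1. apply DC_add. apply J2. apply DC_opp, J3.
  unfold I1, I2, I3, u1, u2, u3, ka. cbv beta; ring.
Qed.
End DPQ.

Lemma qdec A T al be ga y :
  qfun (Bmat A al be ga) T y =
  Cadd (Cmul al (RC (gM T (fun i j => if Nat.eqb i j then 1 else 0) y)))
    (Cadd (Cmul be (RC (gM T A y))) (Cmul ga (RC (gM T (mulR A A) y)))).
Proof.
  unfold qfun, gM, Bmat.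
  change (mulR (df0 T y) (df0 T y)) with (Gm T y).
  remember (Gm T y) as G. remember (mulR A A) as A2. clear HeqG HeqA2.
  destruct al as [a1 a2], be as [b1 b2], ga as [g1 g2].
  cbv [traceC mulC trC embC sumC sumR map seq fold_right idC Nat.eqb Cmul Cadd RC C0 Defs.C1 fst snd].
  f_equal; ring.
Qed.

Definition Ev (V0 V1 V2 : nat -> R) (w : Tr) l :=
  Cadd (Cmul (t0 w) (RC (V0 l))) (Cadd (Cmul (t1 w) (RC (V1 l))) (Cmul (t2 w) (RC (V2 l)))).

Lemma sumB A al be ga (V0 V1 V2 : nat -> R) w k : (k < 6)%nat ->
  sumC 6 (fun l => Cmul (Bmat A al be ga k l) (Ev V0 V1 V2 w l)) =
  Cadd (Cmul al (Ev V0 V1 V2 w k))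
   (Cadd (Cmul be (Cadd (Cmul (t0 w) (RC (sumR 6 (fun l => A k l * V0 l))))
            (Cadd (Cmul (t1 w) (RC (sumR 6 (fun l => A k l * V1 l))))
                  (Cmul (t2 w) (RC (sumR 6 (fun l => A k l * V2 l)))))))
         (Cmul ga (Cadd (Cmul (t0 w) (RC (sumR 6 (fun l => mulR A A k l * V0 l))))
            (Cadd (Cmul (t1 w) (RC (sumR 6 (fun l => mulR A A k l * V1 l))))
                  (Cmul (t2 w) (RC (sumR 6 (fun l => mulR A A k l * V2 l)))))))).
Proof.
  intros hk. unfold Bmat. remember (mulR A A) as A2. clear HeqA2.
  destruct w as [[[w1 w2] [w3 w4]] [w5 w6]], al as [a1 a2], be as [b1 b2], ga as [g1 g2].
  unfold Ev, t0, t1, t2.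
  destruct k as [|[|[|[|[|[|k]]]]]]; try lia;
  cbv [sumC sumR map seq fold_right idC Nat.eqb Cmul Cadd RC C0 Defs.C1 fst snd]; f_equal; ring.
Qed.

Lemma sumB2 A al be ga (V0 V1 V2 : nat -> R) w k c1 c2 c3 : (k < 6)%nat ->
  sumR 6 (fun l => A k l * V0 l) = V1 k ->
  sumR 6 (fun l => A k l * V1 l) = V2 k ->
  sumR 6 (fun l => A k l * V2 l) = c1 * V2 k - c2 * V1 k + c3 * V0 k ->
  sumR 6 (fun l => mulR A A k l * V0 l) = V2 k ->
  sumR 6 (fun l => mulR A A k l * V1 l) = c1 * V2 k - c2 * V1 k + c3 * V0 k ->
  sumR 6 (fun l => mulR A A k l * V2 l) = c1 * (c1 * V2 k - c2 * V1 k + c3 * V0 k) - c2 * V2 k + c3 * V1 k ->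
  sumC 6 (fun l => Cmul (Bmat A al be ga k l) (Ev V0 V1 V2 w l)) =
  Ev V0 V1 V2 (Bt (RC c1) (RC c2) (RC c3) al be ga w) k.
Proof.
  intros hk e1 e2 e3 e4 e5 e6. rewrite sumB by auto. rewrite e1, e2, e3, e4, e5, e6.
  destruct w as [[[w1 w2] [w3 w4]] [w5 w6]], al as [a1 a2], be as [b1 b2], ga as [g1 g2].
  cbv [Ev Bt Cw tadd tsc mkT t0 t1 t2 Cmul Cadd Csub Copp RC C0 Defs.C1 fst snd]; f_equal; ring.
Qed.

Lemma Bt_tadd s1 s2 s3 al be ga v w :
  Bt s1 s2 s3 al be ga (tadd v w) = tadd (Bt s1 s2 s3 al be ga v) (Bt s1 s2 s3 al be ga w).
Proof.
  destruct v as [[? ?] ?], w as [[? ?] ?]. cbv [Bt Cw tadd tsc mkT t0 t1 t2 fst snd].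
  f_equal; [f_equal|]; ring.
Qed.
Lemma Bt_tsc s1 s2 s3 al be ga c v :
  Bt s1 s2 s3 al be ga (tsc c v) = tsc c (Bt s1 s2 s3 al be ga v).
Proof.
  destruct v as [[? ?] ?]. cbv [Bt Cw tadd tsc mkT t0 t1 t2 fst snd].
  f_equal; [f_equal|]; ring.
Qed.
Lemma Ev_tsc V0 V1 V2 c w l : Ev V0 V1 V2 (tsc c w) l = Cmul c (Ev V0 V1 V2 w l).
Proof. destruct w as [[? ?] ?]. cbv [Ev tsc mkT t0 t1 t2 fst snd]. ring. Qed.

Lemma RC_mul' a b : RC (a * b) = Cmul (RC a) (RC b).
Proof. unfold RC, Cmul; simpl; f_equal; ring. Qed.

Lemma FinalAlg s1 s2 s3 al be ga (pi pk pl : Tr) (ui uk ul : Cx) eps : eps <> 0 ->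
  Bt s1 s2 s3 al be ga (tadd pk pl) = tsc (RC (-1)) (tadd pk pl) ->
  Bt s1 s2 s3 al be ga (tadd pi pl) = tsc (RC 1) (tadd pi pl) ->
  Bt s1 s2 s3 al be ga (tadd pi pk) = tsc (RC 1) (tadd pi pk) ->
  let ka := RC (2 * eps ^ 2) in
  tsc (RC (eps ^ 2)) (Bt s1 s2 s3 al be ga
    (tsc (RC (1 / (4 * eps ^ 2)))
      (tadd (tsc (Copp (Cmul (Cmul ui ui) ka)) (tadd pk pl))
        (tadd (tsc (Cmul (Cmul uk uk) ka) (tadd pi pl)) (tsc (Cmul (Cmul ul ul) ka) (tadd pi pk))))))
  = tsc (RC (1/4))
      (tadd (tsc (Cmul (Cmul ui ui) ka) (tadd pk pl))
        (tadd (tsc (Cmul (Cmul uk uk) ka) (tadd pi pl)) (tsc (Cmul (Cmul ul ul) ka) (tadd pi pk)))).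
Proof.
  intros he HA HB HC ka.
  rewrite !Bt_tsc, !Bt_tadd, !Bt_tsc, HA, HB, HC.
  assert (E : RC (1/4) = Cmul (RC (eps ^ 2)) (RC (1 / (4 * eps ^ 2)))).
  { rewrite <- RC_mul'. f_equal. field. auto. }
  assert (E1 : RC 1 = Defs.C1) by reflexivity.
  assert (E2 : RC (-1) = Copp Defs.C1) by (unfold RC, Copp, Defs.C1; simpl; f_equal; ring).
  rewrite E, E1, E2.
  destruct pi as [[? ?] ?], pk as [[? ?] ?], pl as [[? ?] ?].
  cbv [tadd tsc mkT t0 t1 t2 fst snd]. f_equal; [f_equal|]; ring.
Qed.

Lemma evt_mkT a b c l : evt (mkT a b c) l = Cadd (Cadd a (Cmul b l)) (Cmul c (Cmul l l)).
Proof. cbv [evt mkT t0 t1 t2 fst snd]. ring. Qed.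

Lemma piL s1 s2 s3 (ai bi gi ak bk gk al bl gl li lk ll : Cx) :
  li <> lk -> li <> ll -> lk <> ll ->
  s1 = Cadd li (Cadd lk ll) -> s2 = Cadd (Cmul li lk) (Cadd (Cmul li ll) (Cmul lk ll)) ->
  s3 = Cmul li (Cmul lk ll) ->
  Cadd (Cadd ai (Cmul bi li)) (Cmul gi (Cmul li li)) = RC (-1) ->
  Cadd (Cadd ai (Cmul bi lk)) (Cmul gi (Cmul lk lk)) = RC 1 ->
  Cadd (Cadd ai (Cmul bi ll)) (Cmul gi (Cmul ll ll)) = RC 1 ->
  Cadd (Cadd ak (Cmul bk li)) (Cmul gk (Cmul li li)) = RC 1 ->
  Cadd (Cadd ak (Cmul bk lk)) (Cmul gk (Cmul lk lk)) = RC (-1) ->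
  Cadd (Cadd ak (Cmul bk ll)) (Cmul gk (Cmul ll ll)) = RC 1 ->
  Cadd (Cadd al (Cmul bl li)) (Cmul gl (Cmul li li)) = RC 1 ->
  Cadd (Cadd al (Cmul bl lk)) (Cmul gl (Cmul lk lk)) = RC 1 ->
  Cadd (Cadd al (Cmul bl ll)) (Cmul gl (Cmul ll ll)) = RC (-1) ->
  Bt s1 s2 s3 ai bi gi (tadd (mkT ak bk gk) (mkT al bl gl)) = tsc (RC (-1)) (tadd (mkT ak bk gk) (mkT al bl gl)) /\
  Bt s1 s2 s3 ai bi gi (tadd (mkT ai bi gi) (mkT al bl gl)) = tsc (RC 1) (tadd (mkT ai bi gi) (mkT al bl gl)) /\
  Bt s1 s2 s3 ai bi gi (tadd (mkT ai bi gi) (mkT ak bk gk)) = tsc (RC 1) (tadd (mkT ai bi gi) (mkT ak bk gk)).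
Proof.
  intros d1 d2 d3 e1 e2 e3 h1 h2 h3 h4 h5 h6 h7 h8 h9.
  assert (M1 : RC (-1) = Copp Defs.C1) by (unfold RC, Copp, Defs.C1; simpl; f_equal; ring).
  assert (M2 : RC 1 = Defs.C1) by reflexivity.
  split; [|split]; (eapply keyB; [exact d1|exact d2|exact d3|exact e1|exact e2|exact e3|]);
  intros l [H|[H|H]]; subst l; rewrite evt_tadd, !evt_mkT;
  rewrite ?h1, ?h2, ?h3, ?h4, ?h5, ?h6, ?h7, ?h8, ?h9, ?M1, ?M2; ring.
Qed.

Lemma final_case (A : nat -> nat -> R) (V0 V1 V2 : nat -> R) (c1 c2 c3 : R)
  (pi pk pl : Tr) (ui uk ul : Cx) (eps : R) (gQ : nat -> Cx) (k : nat) :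
  eps <> 0 -> (k < 6)%nat ->
  sumR 6 (fun l => A k l * V0 l) = V1 k ->
  sumR 6 (fun l => A k l * V1 l) = V2 k ->
  sumR 6 (fun l => A k l * V2 l) = c1 * V2 k - c2 * V1 k + c3 * V0 k ->
  sumR 6 (fun l => mulR A A k l * V0 l) = V2 k ->
  sumR 6 (fun l => mulR A A k l * V1 l) = c1 * V2 k - c2 * V1 k + c3 * V0 k ->
  sumR 6 (fun l => mulR A A k l * V2 l) = c1 * (c1 * V2 k - c2 * V1 k + c3 * V0 k) - c2 * V2 k + c3 * V1 k ->
  Bt (RC c1) (RC c2) (RC c3) (t0 pi) (t1 pi) (t2 pi) (tadd pk pl) = tsc (RC (-1)) (tadd pk pl) ->
  Bt (RC c1) (RC c2) (RC c3) (t0 pi) (t1 pi) (t2 pi) (tadd pi pl) = tsc (RC 1) (tadd pi pl) ->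
  Bt (RC c1) (RC c2) (RC c3) (t0 pi) (t1 pi) (t2 pi) (tadd pi pk) = tsc (RC 1) (tadd pi pk) ->
  let ka := RC (2 * eps ^ 2) in
  (forall l, (l < 6)%nat -> gQ l = Ev V0 V1 V2
    (tsc (RC (1 / (4 * eps ^ 2)))
      (tadd (tsc (Copp (Cmul (Cmul ui ui) ka)) (tadd pk pl))
        (tadd (tsc (Cmul (Cmul uk uk) ka) (tadd pi pl)) (tsc (Cmul (Cmul ul ul) ka) (tadd pi pk))))) l) ->
  Ev V0 V1 V2 (tsc (RC (1/4))
      (tadd (tsc (Cmul (Cmul ui ui) ka) (tadd pk pl))
        (tadd (tsc (Cmul (Cmul uk uk) ka) (tadd pi pl)) (tsc (Cmul (Cmul ul ul) ka) (tadd pi pk))))) k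
  = Cmul (RC (eps ^ 2)) (sumC 6 (fun l => Cmul (Bmat A (t0 pi) (t1 pi) (t2 pi) k l) (gQ l))).
Proof.
  intros he hk e1 e2 e3 e4 e5 e6 HA HB HC ka hQ.
  rewrite (sumC_ext_lt 6 _ (fun l => Cmul (Bmat A (t0 pi) (t1 pi) (t2 pi) k l) (Ev V0 V1 V2
    (tsc (RC (1 / (4 * eps ^ 2)))
      (tadd (tsc (Copp (Cmul (Cmul ui ui) ka)) (tadd pk pl))
        (tadd (tsc (Cmul (Cmul uk uk) ka) (tadd pi pl)) (tsc (Cmul (Cmul ul ul) ka) (tadd pi pk))))) l))).
  2: { intros l hl; rewrite hQ; auto. }
  rewrite (sumB2 A _ _ _ V0 V1 V2 _ k c1 c2 c3) by auto.
  rewrite <- Ev_tsc. f_equal. symmetry. apply FinalAlg; auto.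
Qed.

Lemma VM_ext T x M M' k : (forall i j, (i<6)%nat -> (j<6)%nat -> M i j = M' i j) -> VM T x M k = VM T x M' k.
Proof. intros H. unfold VM. f_equal. apply sumR_ext; intros; apply sumR_ext; intros. rewrite H; auto. Qed.
Lemma VM_lin T x a b c M1 M2 M3 k :
  VM T x (fun i j => a * M1 i j - b * M2 i j + c * M3 i j) k =
  a * VM T x M1 k - b * VM T x M2 k + c * VM T x M3 k.
Proof. unfold VM. s6. ring. Qed.
Lemma mulR_id A i j : (j < 6)%nat -> mulR A (fun a b => if Nat.eqb a b then 1 else 0) i j = A i j.
Proof. intros hj. destruct j as [|[|[|[|[|[|j]]]]]]; try lia; s6; simpl; ring. Qed.
Lemma X5 (A : nat -> nat -> R) (W : nat -> R) k :
  sumR 6 (fun l => mulR A A k l * W l) = sumR 6 (fun m => A k m * sumR 6 (fun l => A m l * W l)).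
Proof. s6; ring. Qed.
Lemma sumlin (a x y z : nat -> R) c1 c2 c3 :
  sumR 6 (fun m => a m * (c1 * x m - c2 * y m + c3 * z m)) =
  c1 * sumR 6 (fun m => a m * x m) - c2 * sumR 6 (fun m => a m * y m) + c3 * sumR 6 (fun m => a m * z m).
Proof. s6; ring. Qed.
Lemma upd_same (x : nat -> R) k : upd x k (x k) = x.
Proof.
  apply functional_extensionality; intro m. unfold upd.
  destruct (Nat.eqb m k) eqn:E; auto. apply Nat.eqb_eq in E; subst; auto.
Qed.
Lemma DC_unique f t a b : DC f t a -> DC f t b -> a = b.
Proof.
  intros [h1 h2] [h3 h4]. destruct a, b; simpl in *.
  f_equal; eapply uniqueness_limite; eauto.
Qed.

Theorem mainTheorem17
  (A : nat -> nat -> R) (T : nat -> nat -> nat -> R)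
  (lam al be ga : nat -> Cx)
  (* A is skew-Hamiltonian: A^T J = J A *)
  (hA : forall i j, (i < 6)%nat -> (j < 6)%nat ->
          mulR (trR A) Jmat i j = mulR Jmat A i j)
  (* H0 is a homogeneous cubic, given by a symmetric tensor T *)
  (hT : sym3 T)
  (hH : forall x i j, (i < 6)%nat -> (j < 6)%nat ->
          mulR A (hessH0 T x) i j = mulR (hessH0 T x) (trR A) i j)
  (* genericity: char. polynomial = ((z-l1)(z-l2)(z-l3))^2, l_i distinct *)
  (hchar : forall z, charpolyC A z =
     let c := Cmul (Csub z (lam 1%nat)) (Cmul (Csub z (lam 2%nat)) (Csub z (lam 3%nat)))
     in Cmul c c)
  (hd12 : lam 1%nat <> lam 2%nat) (hd13 : lam 1%nat <> lam 3%nat)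
  (hd23 : lam 2%nat <> lam 3%nat)
  (* alpha_i + beta_i l + gamma_i l^2 is -1 at l_i and 1 at the other l_j *)
  (hinterp : forall i j, (1 <= i <= 3)%nat -> (1 <= j <= 3)%nat ->
     Cadd (Cadd (al i) (Cmul (be i) (lam j))) (Cmul (ga i) (Cmul (lam j) (lam j)))
     = (if Nat.eqb i j then RC (-1) else RC 1))
  (* det f0'(x) is not identically zero *)
  (hdet : exists x : nat -> R, detR 6 (df0 T x) <> 0) :
  let B := fun i => Bmat A (al i) (be i) (ga i) in
  let q := fun i x => qfun (B i) T x in
  forall (i : nat), (1 <= i <= 3)%nat ->
  forall (eps : R) (x : nat -> R), eps <> 0 ->
    s123 (q 1%nat x) (q 2%nat x) (q 3%nat x) eps <> C0 ->
  (exists gP, is_gradC (fun y => P0v (q 1%nat y) (q 2%nat y) (q 3%nat y) eps) x gP) /\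
  (exists gQ, is_gradC (fun y => Qv i (q 1%nat y) (q 2%nat y) (q 3%nat y) eps) x gQ) /\
  forall gP gQ : nat -> Cx,
    is_gradC (fun y => P0v (q 1%nat y) (q 2%nat y) (q 3%nat y) eps) x gP ->
    is_gradC (fun y => Qv i (q 1%nat y) (q 2%nat y) (q 3%nat y) eps) x gQ ->
    forall k, (k < 6)%nat ->
      gP k = Cmul (RC (eps ^ 2)) (sumC 6 (fun l => Cmul (B i k l) (gQ l))).
Proof.
  intros B q i hi eps x he hs.
  assert (HS := extract (lam 1%nat) (lam 2%nat) (lam 3%nat) (c1 A) (c2 A) (c3 A)
    ltac:(intros r; cbv zeta; assert (h := hchar (RC r)); cbv zeta in h;
          rewrite <- h, charpoly_real, (DET A hA); reflexivity)).
  destruct HS as [S1 [S2 S3]].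
  set (P0 := fun i j : nat => if Nat.eqb i j then 1 else 0).
  set (V0 := VM T x P0). set (V1 := VM T x A). set (V2 := VM T x (mulR A A)).
  assert (K1 : forall k, (k < 6)%nat -> sumR 6 (fun l => A k l * V0 l) = V1 k).
  { intros k hk. unfold V0, V1. rewrite (KL A T x hA hT hH); auto. apply VM_ext.
    intros; apply mulR_id; auto. }
  assert (K2 : forall k, (k < 6)%nat -> sumR 6 (fun l => A k l * V1 l) = V2 k).
  { intros k hk. unfold V1, V2. rewrite (KL A T x hA hT hH); auto. }
  assert (K3 : forall k, (k < 6)%nat -> sumR 6 (fun l => A k l * V2 l) = c1 A * V2 k - c2 A * V1 k + c3 A * V0 k).
  { intros k hk. unfold V2. rewrite (KL A T x hA hT hH); auto.
    rewrite (VM_ext T x _ (fun i j => c1 A * mulR A A i j - c2 A * A i j + c3 A * idR i j)).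
    rewrite VM_lin. reflexivity. intros; apply CH; auto. }
  assert (K4 : forall k, (k < 6)%nat -> sumR 6 (fun l => mulR A A k l * V0 l) = V2 k).
  { intros k hk. rewrite X5. rewrite <- (K2 k hk). apply sumR_ext; intros m hm. rewrite K1; auto. }
  assert (K5 : forall k, (k < 6)%nat -> sumR 6 (fun l => mulR A A k l * V1 l) = c1 A * V2 k - c2 A * V1 k + c3 A * V0 k).
  { intros k hk. rewrite X5. rewrite <- (K3 k hk). apply sumR_ext; intros m hm. rewrite K2; auto. }
  assert (K6 : forall k, (k < 6)%nat -> sumR 6 (fun l => mulR A A k l * V2 l) =
     c1 A * (c1 A * V2 k - c2 A * V1 k + c3 A * V0 k) - c2 A * V2 k + c3 A * V1 k).
  { intros k hk. rewrite X5.
    rewrite (sumR_ext 6 _ (fun m => A k m * (c1 A * V2 m - c2 A * V1 m + c3 A * V0 m))).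
    rewrite sumlin, K1, K2, K3 by auto. ring.
    intros m hm. rewrite K3; auto. }
  assert (dq : forall j k, (k < 6)%nat ->
    DC (fun t => q j (upd x k t)) (x k) (Ev V0 V1 V2 (mkT (al j) (be j) (ga j)) k)).
  { intros j k hk. unfold q, B. eapply DC_ext. intros s. apply qdec. eapply DC_eq.
    apply DC_add. apply DC_mul. apply DC_const. apply DC_RC. apply dgM; auto.
    apply DC_add. apply DC_mul. apply DC_const. apply DC_RC. apply dgM; auto.
    apply DC_mul. apply DC_const. apply DC_RC. apply dgM; auto.
    unfold V0, V1, V2, P0. cbv [Ev mkT t0 t1 t2 fst snd]. ring. }
  assert (hs' := hs). unfold s123 in hs'. cbv zeta in hs'.
  assert (n1 : sfun (q 2%nat x) (q 3%nat x) eps <> C0) by (intro h; apply hs'; rewrite h; ring).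
  assert (n2 : sfun (q 1%nat x) (q 3%nat x) eps <> C0) by (intro h; apply hs'; rewrite h; ring).
  assert (n3 : sfun (q 1%nat x) (q 2%nat x) eps <> C0) by (intro h; apply hs'; rewrite h; ring).
  set (d := fun j k => Ev V0 V1 V2 (mkT (al j) (be j) (ga j)) k).
  set (u1 := Cinv (sfun (q 2%nat x) (q 3%nat x) eps)).
  set (u2 := Cinv (sfun (q 1%nat x) (q 3%nat x) eps)).
  set (u3 := Cinv (sfun (q 1%nat x) (q 2%nat x) eps)).
  set (ka := RC (2 * eps ^ 2)).
  set (I1 := fun k => dinv u1 ka (d 2%nat k) (d 3%nat k)).
  set (I2 := fun k => dinv u2 ka (d 1%nat k) (d 3%nat k)).
  set (I3 := fun k => dinv u3 ka (d 1%nat k) (d 2%nat k)).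
  assert (gradP : forall k, (k < 6)%nat ->
    DC (fun t => P0v (q 1%nat (upd x k t)) (q 2%nat (upd x k t)) (q 3%nat (upd x k t)) eps) (x k)
      (Cmul (RC (1/4)) (Cadd (I1 k) (Cadd (I2 k) (I3 k))))).
  { intros k hk.
    assert (D := DP (fun t => q 1%nat (upd x k t)) (fun t => q 2%nat (upd x k t)) (fun t => q 3%nat (upd x k t))
      (x k) eps _ _ _ (dq 1%nat k hk) (dq 2%nat k hk) (dq 3%nat k hk)
      ltac:(cbv beta; rewrite upd_same; exact n1) ltac:(cbv beta; rewrite upd_same; exact n2)
      ltac:(cbv beta; rewrite upd_same; exact n3)).
    cbv beta in D. rewrite !upd_same in D. exact D. }
  assert (EP : exists gP, is_gradC (fun y => P0v (q 1%nat y) (q 2%nat y) (q 3%nat y) eps) x gP).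
  { eexists. intros k hk. exact (gradP k hk). }
  destruct i as [|[|[|[|i]]]]; try lia.
  - cbn [Qv].
    assert (gradQ : forall k, (k < 6)%nat ->
      DC (fun t => Q1v (q 1%nat (upd x k t)) (q 2%nat (upd x k t)) (q 3%nat (upd x k t)) eps) (x k)
        (Cmul (RC (1 / (4 * eps ^ 2))) (Cadd (Copp (I1 k)) (Cadd (I2 k) (I3 k))))).
    { intros k hk.
      assert (D := DQ1 (fun t => q 1%nat (upd x k t)) (fun t => q 2%nat (upd x k t)) (fun t => q 3%nat (upd x k t))
        (x k) eps _ _ _ (dq 1%nat k hk) (dq 2%nat k hk) (dq 3%nat k hk)
        ltac:(cbv beta; rewrite upd_same; exact n1) ltac:(cbv beta; rewrite upd_same; exact n2)
        ltac:(cbv beta; rewrite upd_same; exact n3)).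
      cbv beta in D. rewrite !upd_same in D. exact D. }
    split; [exact EP|]. split; [eexists; intros k hk; exact (gradQ k hk)|].
    intros gP gQ HP HQ k hk.
    assert (eP : gP k = Cmul (RC (1/4)) (Cadd (I1 k) (Cadd (I2 k) (I3 k)))).
    { apply (DC_unique (fun t => P0v (q 1%nat (upd x k t)) (q 2%nat (upd x k t)) (q 3%nat (upd x k t)) eps) (x k)).
      exact (HP k hk). apply gradP; auto. }
    assert (eQ : forall l, (l < 6)%nat -> gQ l = Cmul (RC (1 / (4 * eps ^ 2))) (Cadd (Copp (I1 l)) (Cadd (I2 l) (I3 l)))).
    { intros l hl. apply (DC_unique (fun t => Q1v (q 1%nat (upd x l t)) (q 2%nat (upd x l t)) (q 3%nat (upd x l t)) eps) (x l)).
      exact (HQ l hl). apply gradQ; auto. }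
    assert (hv := fun a b => hinterp a b).
    assert (PI := piL (RC (c1 A)) (RC (c2 A)) (RC (c3 A)) (al 1%nat) (be 1%nat) (ga 1%nat)
      (al 2%nat) (be 2%nat) (ga 2%nat) (al 3%nat) (be 3%nat) (ga 3%nat)
      (lam 1%nat) (lam 2%nat) (lam 3%nat)
      ltac:(auto) ltac:(auto) ltac:(auto) S1 S2 S3
      (hv 1%nat 1%nat ltac:(lia) ltac:(lia)) (hv 1%nat 2%nat ltac:(lia) ltac:(lia)) (hv 1%nat 3%nat ltac:(lia) ltac:(lia))
      (hv 2%nat 1%nat ltac:(lia) ltac:(lia)) (hv 2%nat 2%nat ltac:(lia) ltac:(lia)) (hv 2%nat 3%nat ltac:(lia) ltac:(lia))
      (hv 3%nat 1%nat ltac:(lia) ltac:(lia)) (hv 3%nat 2%nat ltac:(lia) ltac:(lia)) (hv 3%nat 3%nat ltac:(lia) ltac:(lia))).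
    destruct PI as [PA [PB PC]].
    rewrite eP.
    set (pi := mkT (al 1%nat) (be 1%nat) (ga 1%nat)). set (pk := mkT (al 2%nat) (be 2%nat) (ga 2%nat)).
    set (pl := mkT (al 3%nat) (be 3%nat) (ga 3%nat)).
    transitivity (Ev V0 V1 V2 (tsc (RC (1/4))
      (tadd (tsc (Cmul (Cmul u1 u1) ka) (tadd pk pl))
        (tadd (tsc (Cmul (Cmul u2 u2) ka) (tadd pi pl)) (tsc (Cmul (Cmul u3 u3) ka) (tadd pi pk))))) k).
    { unfold I1, I2, I3, dinv, d, pi, pk, pl. cbv [Ev tsc tadd mkT t0 t1 t2 fst snd]. ring. }
    apply (final_case A V0 V1 V2 (c1 A) (c2 A) (c3 A) pi pk pl u1 u2 u3 eps gQ k he hk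
      (K1 k hk) (K2 k hk) (K3 k hk) (K4 k hk) (K5 k hk) (K6 k hk) PA PB PC).
    intros l hl. rewrite eQ by auto.
    unfold I1, I2, I3, dinv, d, pi, pk, pl, ka. cbv [Ev tsc tadd mkT t0 t1 t2 fst snd]. ring.
  - cbn [Qv].
    assert (gradQ : forall k, (k < 6)%nat ->
      DC (fun t => Q2v (q 1%nat (upd x k t)) (q 2%nat (upd x k t)) (q 3%nat (upd x k t)) eps) (x k)
        (Cmul (RC (1 / (4 * eps ^ 2))) (Cadd (I1 k) (Cadd (Copp (I2 k)) (I3 k))))).
    { intros k hk.
      assert (D := DQ2 (fun t => q 1%nat (upd x k t)) (fun t => q 2%nat (upd x k t)) (fun t => q 3%nat (upd x k t))
        (x k) eps _ _ _ (dq 1%nat k hk) (dq 2%nat k hk) (dq 3%nat k hk)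
        ltac:(cbv beta; rewrite upd_same; exact n1) ltac:(cbv beta; rewrite upd_same; exact n2)
        ltac:(cbv beta; rewrite upd_same; exact n3)).
      cbv beta in D. rewrite !upd_same in D. exact D. }
    split; [exact EP|]. split; [eexists; intros k hk; exact (gradQ k hk)|].
    intros gP gQ HP HQ k hk.
    assert (eP : gP k = Cmul (RC (1/4)) (Cadd (I1 k) (Cadd (I2 k) (I3 k)))).
    { apply (DC_unique (fun t => P0v (q 1%nat (upd x k t)) (q 2%nat (upd x k t)) (q 3%nat (upd x k t)) eps) (x k)).
      exact (HP k hk). apply gradP; auto. }
    assert (eQ : forall l, (l < 6)%nat -> gQ l = Cmul (RC (1 / (4 * eps ^ 2))) (Cadd (I1 l) (Cadd (Copp (I2 l)) (I3 l)))).
    { intros l hl. apply (DC_unique (fun t => Q2v (q 1%nat (upd x l t)) (q 2%nat (upd x l t)) (q 3%nat (upd x l t)) eps) (x l)).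
      exact (HQ l hl). apply gradQ; auto. }
    assert (hv := fun a b => hinterp a b).
    assert (PI := piL (RC (c1 A)) (RC (c2 A)) (RC (c3 A)) (al 2%nat) (be 2%nat) (ga 2%nat)
      (al 1%nat) (be 1%nat) (ga 1%nat) (al 3%nat) (be 3%nat) (ga 3%nat)
      (lam 2%nat) (lam 1%nat) (lam 3%nat)
      ltac:(auto) ltac:(auto) ltac:(auto) ltac:(rewrite S1; ring) ltac:(rewrite S2; ring) ltac:(rewrite S3; ring)
      (hv 2%nat 2%nat ltac:(lia) ltac:(lia)) (hv 2%nat 1%nat ltac:(lia) ltac:(lia)) (hv 2%nat 3%nat ltac:(lia) ltac:(lia))
      (hv 1%nat 2%nat ltac:(lia) ltac:(lia)) (hv 1%nat 1%nat ltac:(lia) ltac:(lia)) (hv 1%nat 3%nat ltac:(lia) ltac:(lia))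
      (hv 3%nat 2%nat ltac:(lia) ltac:(lia)) (hv 3%nat 1%nat ltac:(lia) ltac:(lia)) (hv 3%nat 3%nat ltac:(lia) ltac:(lia))).
    destruct PI as [PA [PB PC]].
    rewrite eP.
    set (pi := mkT (al 2%nat) (be 2%nat) (ga 2%nat)). set (pk := mkT (al 1%nat) (be 1%nat) (ga 1%nat)).
    set (pl := mkT (al 3%nat) (be 3%nat) (ga 3%nat)).
    transitivity (Ev V0 V1 V2 (tsc (RC (1/4))
      (tadd (tsc (Cmul (Cmul u2 u2) ka) (tadd pk pl))
        (tadd (tsc (Cmul (Cmul u1 u1) ka) (tadd pi pl)) (tsc (Cmul (Cmul u3 u3) ka) (tadd pi pk))))) k).
    { unfold I1, I2, I3, dinv, d, pi, pk, pl. cbv [Ev tsc tadd mkT t0 t1 t2 fst snd]. ring. }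
    apply (final_case A V0 V1 V2 (c1 A) (c2 A) (c3 A) pi pk pl u2 u1 u3 eps gQ k he hk
      (K1 k hk) (K2 k hk) (K3 k hk) (K4 k hk) (K5 k hk) (K6 k hk) PA PB PC).
    intros l hl. rewrite eQ by auto.
    unfold I1, I2, I3, dinv, d, pi, pk, pl, ka. cbv [Ev tsc tadd mkT t0 t1 t2 fst snd]. ring.
  - cbn [Qv].
    assert (gradQ : forall k, (k < 6)%nat ->
      DC (fun t => Q3v (q 1%nat (upd x k t)) (q 2%nat (upd x k t)) (q 3%nat (upd x k t)) eps) (x k)
        (Cmul (RC (1 / (4 * eps ^ 2))) (Cadd (I1 k) (Cadd (I2 k) (Copp (I3 k)))))).
    { intros k hk.
      assert (D := DQ3 (fun t => q 1%nat (upd x k t)) (fun t => q 2%nat (upd x k t)) (fun t => q 3%nat (upd x k t))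
        (x k) eps _ _ _ (dq 1%nat k hk) (dq 2%nat k hk) (dq 3%nat k hk)
        ltac:(cbv beta; rewrite upd_same; exact n1) ltac:(cbv beta; rewrite upd_same; exact n2)
        ltac:(cbv beta; rewrite upd_same; exact n3)).
      cbv beta in D. rewrite !upd_same in D. exact D. }
    split; [exact EP|]. split; [eexists; intros k hk; exact (gradQ k hk)|].
    intros gP gQ HP HQ k hk.
    assert (eP : gP k = Cmul (RC (1/4)) (Cadd (I1 k) (Cadd (I2 k) (I3 k)))).
    { apply (DC_unique (fun t => P0v (q 1%nat (upd x k t)) (q 2%nat (upd x k t)) (q 3%nat (upd x k t)) eps) (x k)).
      exact (HP k hk). apply gradP; auto. }
    assert (eQ : forall l, (l < 6)%nat -> gQ l = Cmul (RC (1 / (4 * eps ^ 2))) (Cadd (I1 l) (Cadd (I2 l) (Copp (I3 l))))).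
    { intros l hl. apply (DC_unique (fun t => Q3v (q 1%nat (upd x l t)) (q 2%nat (upd x l t)) (q 3%nat (upd x l t)) eps) (x l)).
      exact (HQ l hl). apply gradQ; auto. }
    assert (hv := fun a b => hinterp a b).
    assert (PI := piL (RC (c1 A)) (RC (c2 A)) (RC (c3 A)) (al 3%nat) (be 3%nat) (ga 3%nat)
      (al 1%nat) (be 1%nat) (ga 1%nat) (al 2%nat) (be 2%nat) (ga 2%nat)
      (lam 3%nat) (lam 1%nat) (lam 2%nat)
      ltac:(auto) ltac:(auto) ltac:(auto) ltac:(rewrite S1; ring) ltac:(rewrite S2; ring) ltac:(rewrite S3; ring)
      (hv 3%nat 3%nat ltac:(lia) ltac:(lia)) (hv 3%nat 1%nat ltac:(lia) ltac:(lia)) (hv 3%nat 2%nat ltac:(lia) ltac:(lia))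
      (hv 1%nat 3%nat ltac:(lia) ltac:(lia)) (hv 1%nat 1%nat ltac:(lia) ltac:(lia)) (hv 1%nat 2%nat ltac:(lia) ltac:(lia))
      (hv 2%nat 3%nat ltac:(lia) ltac:(lia)) (hv 2%nat 1%nat ltac:(lia) ltac:(lia)) (hv 2%nat 2%nat ltac:(lia) ltac:(lia))).
    destruct PI as [PA [PB PC]].
    rewrite eP.
    set (pi := mkT (al 3%nat) (be 3%nat) (ga 3%nat)). set (pk := mkT (al 1%nat) (be 1%nat) (ga 1%nat)).
    set (pl := mkT (al 2%nat) (be 2%nat) (ga 2%nat)).
    transitivity (Ev V0 V1 V2 (tsc (RC (1/4))
      (tadd (tsc (Cmul (Cmul u3 u3) ka) (tadd pk pl))
        (tadd (tsc (Cmul (Cmul u1 u1) ka) (tadd pi pl)) (tsc (Cmul (Cmul u2 u2) ka) (tadd pi pk))))) k).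
    { unfold I1, I2, I3, dinv, d, pi, pk, pl. cbv [Ev tsc tadd mkT t0 t1 t2 fst snd]. ring. }
    apply (final_case A V0 V1 V2 (c1 A) (c2 A) (c3 A) pi pk pl u3 u1 u2 eps gQ k he hk
      (K1 k hk) (K2 k hk) (K3 k hk) (K4 k hk) (K5 k hk) (K6 k hk) PA PB PC).
    intros l hl. rewrite eQ by auto.
    unfold I1, I2, I3, dinv, d, pi, pk, pl, ka. cbv [Ev tsc tadd mkT t0 t1 t2 fst snd]. ring.
Qed.
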